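(* Let $G=(V,E)$ be a finite simple graph of order $n$ and let $T=n-1$. If $(s,x,y,z)$ is an optimal solution of the integer program with the constraints of the Infection Model $\mathrm{IM}(G,T)$ and objective ''minimize $\sum_{v\in V}s_v+\frac{z}{2T}$'', then $C=\{v\in V\colon s_v=1\}$ is a minimum zero forcing set of $G$ with $\mathrm{pt}(G)=\mathrm{pt}(G,C)=z$.
   Context: Zero forcing: under the standard color change rule a filled vertex $u$ can force a non-filled vertex $v$ if $v$ is the only non-filled neighbor of $u$; $C\subseteq V$ is a zero forcing set if, starting with $C$ filled and repeatedly forcing, all of $V$ becomes filled. $\mathrm{Z}(G)$ is the minimum size of a zero forcing set; a minimum zero forcing set has size $\mathrm{Z}(G)$. The propagation time $\mathrm{pt}(G,C)$ is the smallest $t^*$ such that, starting from $C^{[0]}=C$ and setting $C^{[t]}=C^{[t-1]}\cup\{v\notin C^{[t-1]}\colon$ some $u\in C^{[t-1]}$ has $v$ as its only neighbor outside $C^{[t-1]}\}$, one has $C^{[t^*]}=V$ ($\infty$ if $C$ is not a zero forcing set). $\mathrm{pt}(G)=\min\{\mathrm{pt}(G,C)\colon C$ a minimum zero forcing set$\}$. $N(u)$ is the neighborhood of $u$. Infection Model constraints: let $A$ be the set of arcs containing both $(u,v)$ and $(v,u)$ for each edge $\{u,v\}\in E$. Variables $s_v\in\{0,1\}$ and $x_v\in\{0,1,\dots,T\}$ for $v\in V$, $y_a\in\{0,1\}$ for $a\in A$, and $z\in\{0,1,\dots,T\}$, subject to: (i) $s_v+\sum_{a=(u,v)\in A}y_a=1$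 for all $v\in V$; (ii) $x_u-x_v+(T+1)y_a\leq T$ for all $a=(u,v)\in A$; (iii) $x_w-x_v+(T+1)y_a\leq T$ for all $a=(u,v)\in A$ and $w\in N(u)\setminus\{v\}$; (iv) $x_v-z\leq 0$ for all $v\in V$. *)

(* Defs.v *)
From mathcomp Require Import all_boot all_order all_algebra.
Set Implicit Arguments. Unset Strict Implicit. Unset Printing Implicit Defensive.
Import GRing.Theory Num.Theory.

Section ZF.
Variables (V : finType) (e : rel V).

(* one round of the standard color change rule, applied simultaneously *)
Definition zf_step (C : {set V}) : {set V} :=
  C :|: [set v | (v \notin C) &&
           [exists u, [&& u \in C, e u v &
              [forall w, (e u w && (w \notin C)) ==> (w == v)]]]].

Definition zf_prop (C : {set V}) (t : nat) : {set V} := iter t zf_step C.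

Definition zero_forcing_set (C : {set V}) : Prop :=
  exists t, zf_prop C t = setT.

Definition min_zero_forcing_set (C : {set V}) : Prop :=
  zero_forcing_set C /\ forall D : {set V}, zero_forcing_set D -> #|C| <= #|D|.

Definition pt_set_is (C : {set V}) (t : nat) : Prop :=
  zf_prop C t = setT /\ forall t', t' < t -> zf_prop C t' != setT.

Definition pt_graph_is (t : nat) : Prop :=
  (exists C, min_zero_forcing_set C /\ pt_set_is C t) /\
  forall C t', min_zero_forcing_set C -> pt_set_is C t' -> t <= t'.

(* Constraints of the Infection Model IM(G,T); arcs are the ordered pairs
   (u,v) with e u v.  y is only meaningful on arcs. Binary variables are
   booleans (coerced to 0/1); the linear inequalities with subtraction are
   stated with terms moved to the other side (over nat). *)
Definition IM_feasible (T : nat) (s : V -> bool) (x : V -> nat)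
    (y : V -> V -> bool) (z : nat) : Prop :=
  [/\ (forall v, x v <= T) /\ z <= T,
      (forall v, s v + \sum_(u | e u v) (y u v : nat) = 1),
      (forall u v, e u v -> x u + T.+1 * y u v <= T + x v),
      (forall u v w, e u v -> e u w -> w != v ->
          x w + T.+1 * y u v <= T + x v)
    & (forall v, x v <= z)].

Definition IM_objective (T : nat) (s : V -> bool) (z : nat) : rat :=
  ((\sum_(v : V) (s v : nat))%N%:R + z%:R / (2 * T)%N%:R)%R.

Definition IM_optimal (T : nat) s x y z : Prop :=
  IM_feasible T s x y z /\
  forall s' x' y' z', IM_feasible T s' x' y' z' ->
     (IM_objective T s z <= IM_objective T s' z')%R.
End ZF.

(* Main.v *)
Require Import Defs.
From mathcomp Require Import all_boot all_order all_algebra.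
From mathcomp Require Import zify lra.
Import GRing.Theory Num.Theory.

Section Aux.
Local Set Implicit Arguments.
Variables (V : finType) (e : rel V).

Lemma step_sub (A : {set V}) : A \subset zf_step e A.
Proof. exact: subsetUl. Qed.

Lemma prop_S (A : {set V}) k : zf_prop e A k.+1 = zf_step e (zf_prop e A k).
Proof. by []. Qed.

Lemma prop_mono {A : {set V}} {k m} : k <= m -> zf_prop e A k \subset zf_prop e A m.
Proof.
elim: m => [|m IH] hk; first by move: hk; rewrite leqn0 => /eqP->.
move: hk; rewrite leq_eqVlt; case/orP => [/eqP->|hk]; first exact: subxx.
rewrite ltnS in hk.
exact: subset_trans (IH hk) (step_sub _).
Qed.

Lemma prop_fix {A : {set V}} {k} :
  zf_step e (zf_prop e A k) = zf_prop e A k ->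
  forall m, k <= m -> zf_prop e A m = zf_prop e A k.
Proof.
move=> H; elim=> [|m IH]; first by rewrite leqn0 => /eqP->.
rewrite leq_eqVlt; case/orP=> [/eqP->//|hk]; rewrite ltnS in hk.
by rewrite prop_S IH.
Qed.

Lemma step0 : zf_step e set0 = set0.
Proof.
apply/setP => v; rewrite /zf_step !inE /=.
apply/negbTE/negP => /existsP[u]; by rewrite inE.
Qed.

Lemma prop0 m : zf_prop e set0 m = set0.
Proof. by elim: m => [|m IH] //; rewrite prop_S IH step0. Qed.

Lemma pt_le {A : {set V}} {t} : pt_set_is e A t -> t <= #|V|.-1.
Proof.
case=> HT Hmin.
have Hc : forall k, k <= t -> #|A| + k <= #|zf_prop e A k|.
  elim=> [|k IH] hk; first by rewrite addn0.
  have hkt : k < t by [].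
  have Hne : zf_prop e A k.+1 != zf_prop e A k.
    apply/negP=> /eqP H.
    have H' := prop_fix H t (ltnW hkt). rewrite HT in H'.
    by move: (Hmin k hkt); rewrite -H' eqxx.
  have Hp : zf_prop e A k \proper zf_prop e A k.+1.
    by rewrite properEneq eq_sym Hne step_sub.
  have := proper_card Hp. move: (IH (ltnW hk)). lia.
have := Hc t (leqnn t). rewrite HT cardsT.
case: t HT Hmin Hc => [|t] HT Hmin Hc //.
have : A != set0.
  apply/negP=>/eqP HA. move: HT; rewrite HA prop0 => HT.
  by move: (Hmin 0 erefl); rewrite HA /= HT eqxx.
rewrite -card_gt0. lia.
Qed.

Lemma sum_mem (A : {set V}) : \sum_v ((v \in A) : nat) = #|A|.
Proof.
rewrite -sum1_card [RHS]big_mkcond /=; apply: eq_bigr => v _; by case: (v \in A).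
Qed.

Lemma cover {T s x y z} : IM_feasible e T s x y z ->
  forall t v, x v <= t -> v \in zf_prop e [set v | s v] t.
Proof.
case=> _ H1 H2 H3 _.
have Hpar v : ~~ s v -> exists2 u, e u v & y u v.
  move=> Hs; move: (H1 v); rewrite (negbTE Hs) add0n => Hsum.
  case: (boolP [exists u, e u v && y u v]) => [/existsP[u /andP[]]| Hn];
    first by exists u.
  move: Hsum; rewrite big1 // => u Heu.
  case Hy: (y u v) => //.
  by move: Hn; rewrite negb_exists => /forallP/(_ u); rewrite Heu Hy.
elim=> [|t IH] v Hv.
  case Hs: (s v); first by rewrite /= inE Hs.
  have [u Heu Hy] := Hpar v (negbT Hs).
  move: (H2 u v Heu); rewrite Hy muln1. lia.
case Hs: (s v).
  apply: (subsetP (prop_mono (leq0n t.+1))); by rewrite /= inE Hs.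
have [u Heu Hy] := Hpar v (negbT Hs).
have Hxu := H2 u v Heu; rewrite Hy muln1 in Hxu.
rewrite prop_S /zf_step !inE.
case Hin: (v \in zf_prop e _ t) => //=.
apply/existsP; exists u. rewrite Heu IH /=; last lia.
apply/forallP=> w; apply/implyP=>/andP[Hew Hw].
case: (eqVneq w v) => // hwv.
have := H3 u v w Heu Hew hwv; rewrite Hy muln1 => Hxw.
have : w \in zf_prop e [set v | s v] t by apply: IH; lia.
by rewrite (negbTE Hw).
Qed.

Lemma feasible_of {D : {set V}} {t} : pt_set_is e D t ->
  exists x y, IM_feasible e #|V|.-1 (fun v => v \in D) x y t.
Proof.
move=> HD.
have HtT := pt_le HD.
case: HD => HT Hmin.
have ex : forall v, exists k, v \in zf_prop e D k.
  by move=> v; exists t; rewrite HT inE.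
pose x := fun v => ex_minn (ex v).
have hx1 v : v \in zf_prop e D (x v) by rewrite /x; case: ex_minnP.
have hx2 v k : v \in zf_prop e D k -> x v <= k.
  by rewrite /x; case: ex_minnP => m _ Hm; apply: Hm.
have hxt v : x v <= t by apply: hx2; rewrite HT inE.
have hx0 v : v \notin D -> 0 < x v.
  move=> Hv; case E: (x v) => [|//]; have := hx1 v; rewrite E /=.
  by rewrite (negbTE Hv).
pose P v u := [&& u \in zf_prop e D (x v).-1, e u v &
   [forall w, (e u w && (w \notin zf_prop e D (x v).-1)) ==> (w == v)]].
have hforce v : v \notin D -> exists u, P v u.
  move=> Hv. have Hk := prednK (hx0 v Hv).
  set k := (x v).-1 in Hk *.
  have := hx1 v; rewrite -Hk prop_S /zf_step !inE.
  have -> : (v \in zf_prop e D k) = false.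
    apply/negbTE/negP => /hx2; lia.
  move=> /= /existsP[u Hu]; by exists u.
pose y u v := (v \notin D) && ([pick u' | P v u'] == Some u).
have Hy u v : y u v -> P v u /\ v \notin D.
  rewrite /y; case/andP => Hv; case: (pickP (P v)) => // u' Hu' /eqP[<-]. done.
exists x, y; split.
- split; [move=> v; exact: leq_trans (hxt v) HtT | exact: HtT].
- move=> v; case Hv: (v \in D).
    rewrite big1 // => u _; by rewrite /y Hv.
  rewrite add0n /y Hv /=.
  case: (pickP (P v)) => [u0 Hu0 | Hn]; last first.
    by have [u Hu] := hforce v (negbT Hv); move: (Hn u); rewrite Hu.
  have Heu0 : e u0 v by case/and3P: Hu0.
  rewrite (bigD1 u0) //= eqxx big1 // => u /andP[_ hne].
  case: eqP => // [[E]]; by rewrite E eqxx in hne.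
- move=> u v Heu; case Hyuv: (y u v); last first.
    rewrite muln0 addn0; have := hxt u; lia.
  have [/and3P[Hu _ _] Hv] := Hy u v Hyuv.
  have := hx2 _ _ Hu; have := hx0 v Hv; rewrite muln1; lia.
- move=> u v w Heu Hew hwv; case Hyuv: (y u v); last first.
    rewrite muln0 addn0; have := hxt w; lia.
  have [/and3P[_ _ Hf] Hv] := Hy u v Hyuv.
  have Hw : w \in zf_prop e D (x v).-1.
    move: hwv; apply: contraNT => Hn.
    by move/forallP: Hf => /(_ w) /implyP; apply; rewrite Hew Hn.
  have := hx2 _ _ Hw; have := hx0 v Hv; rewrite muln1; lia.
- move=> v; exact: hxt.
Qed.

End Aux.

Lemma obj_cmp (T a b z t : nat) : z <= T -> t <= T ->
  ((a%:R + z%:R / (2 * T)%N%:R) <= (b%:R + t%:R / (2 * T)%N%:R) :> rat)%R ->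
  a <= b /\ (a = b -> z <= t).
Proof.
move=> hz ht H.
case: (posnP T) => [T0|Tpos].
  have -> : z = 0 by lia.
  split => //.
  move: H; rewrite T0 muln0 invr0 !mulr0 !addr0 ler_nat //.
have c0 : (0 < ((2 * T)%N%:R : rat)^-1)%R by rewrite invr_gt0 ltr0n; lia.
have q01 k : k <= T -> (0 <= k%:R / (2 * T)%N%:R :> rat)%R /\ (k%:R / (2 * T)%N%:R < 1 :> rat)%R.
  move=> hk; split; first by apply: mulr_ge0; [exact: ler0n | rewrite invr_ge0 ler0n].
  rewrite ltr_pdivrMr ?mul1r ?ltr_nat; [lia|]. rewrite ltr0n; lia.
have [z0 z1] := q01 z hz. have [t0 t1] := q01 t ht.
split.
  have : (a%:R < (b.+1)%:R :> rat)%R.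
    rewrite -addn1 natrD. lra.
  rewrite ltr_nat. lia.
move=> Eab; subst b.
have : (z%:R / (2 * T)%N%:R <= t%:R / (2 * T)%N%:R :> rat)%R by lra.
by rewrite ler_pM2r // ler_nat.
Qed.

Theorem corollary3p4 (V : finType) (e : rel V)
    (e_sym : symmetric e) (e_irr : irreflexive e)
    (s : V -> bool) (x : V -> nat) (y : V -> V -> bool) (z : nat) :
  IM_optimal e #|V|.-1 s x y z ->
  let C := [set v | s v] in
  min_zero_forcing_set e C /\ pt_graph_is e z /\ pt_set_is e C z.
Proof.
case=> Hf Hopt C.
have HCz : zf_prop e C z = setT.
  apply/setP=> v; rewrite inE; apply: (cover Hf z v).
  by case: Hf => _ _ _ _ ->.
have HzT : z <= #|V|.-1 by case: Hf => [[_ ->]].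
have sumC : \sum_(v : V) (s v : nat) = #|C|.
  rewrite -sum_mem; apply: eq_bigr => v _; by rewrite inE.
have Hpt : forall D, zero_forcing_set e D -> exists t, pt_set_is e D t.
  move=> D [t0 Ht0].
  have ex : exists k, zf_prop e D k == setT by exists t0; rewrite Ht0.
  case: (ex_minnP ex) => m /eqP Hm Hmn; exists m; split => // t' lt.
  apply/negP => H; have := Hmn _ H; lia.
have Hcmp : forall D t', pt_set_is e D t' ->
    #|C| <= #|D| /\ (#|C| = #|D| -> z <= t').
  move=> D t' HD. have [x' [y' Hf']] := feasible_of HD.
  have := Hopt _ _ _ _ Hf'. rewrite /IM_objective sumC sum_mem.
  apply: obj_cmp => //; exact: pt_le HD.
have HminC : min_zero_forcing_set e C.
  split; first by exists z.
  move=> D HD; have [t' Ht'] := Hpt D HD; exact: (Hcmp D t' Ht').1.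
have HptC : pt_set_is e C z.
  have [t0 Ht0] := Hpt C (ex_intro _ z HCz).
  have h1 := (Hcmp C t0 Ht0).2 erefl.
  have h2 : t0 <= z.
    rewrite leqNgt; apply/negP => hlt.
    by move: (Ht0.2 z hlt); rewrite HCz eqxx.
  by have -> : z = t0 by apply/eqP; rewrite eqn_leq h1 h2.
split => //; split => //.
split; first by exists C.
move=> C' t' Hm Hp.
have Ec : #|C| = #|C'|.
  by apply/anti_leq; rewrite (HminC.2 _ Hm.1) (Hm.2 _ HminC.1).
exact: (Hcmp C' t' Hp).2 Ec.
Qed.
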